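(* Let $S=(s_{ij})$ and $C=(c_{ij})$ be real symmetric $n\times n$ matrices with spectra (counted with multiplicities) $\sigma(S)=(\lambda_1,\ldots,\lambda_n)$ and $\sigma(C)=(\mu_1,\ldots,\mu_n)$, let $0\le\gamma\le1$, and suppose $|c_{ij}|\le s_{ij}$ for all $1\le i,j\le n$. Then $\tfrac12(S+\gamma C)$ and $\tfrac12(S-\gamma C)$ are symmetric nonnegative matrices, and the $2n\times 2n$ block matrices $M_{\pm\gamma}=(M_{ij,\pm\gamma})_{i,j=1}^n$ with $$M_{ij,\pm\gamma}=\begin{pmatrix}\frac{s_{ij}\pm\gamma c_{ij}}{2} & \frac{s_{ij}\mp\gamma c_{ij}}{2}\\ \frac{s_{ij}\mp\gamma c_{ij}}{2} & \frac{s_{ij}\pm\gamma c_{ij}}{2}\end{pmatrix}$$ are symmetric nonnegative matrices realizing, respectively, the lists $(\lambda_1,\ldots,\lambda_n,\pm\gamma\mu_1,\ldots,\pm\gamma\mu_n)$ (with $+$ for $M_{+\gamma}$ and $-$ for $M_{-\gamma}$).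
   Context: A matrix realizes a list of complex numbers if the list is its spectrum counted with multiplicities. Nonnegative means entrywise nonnegative. *)

(* Defs.v *)
From HB Require Import structures.
From mathcomp Require Import all_boot all_order all_algebra.
From mathcomp Require Import reals.
Set Implicit Arguments. Unset Strict Implicit. Unset Printing Implicit Defensive.
Import Order.TTheory GRing.Theory Num.Theory.
Local Open Scope ring_scope.

Definition is_symmetric (R : nzRingType) (n : nat) (A : 'M[R]_n) : Prop := A^T = A.

Definition nonnegmx (R : numDomainType) (m n : nat) (A : 'M[R]_(m, n)) : Prop :=
  forall i j, 0 <= A i j.

(* A realizes the list l: l is the spectrum of A counted with (algebraic)
   multiplicities, i.e. the characteristic polynomial of A splits as the
   product of ('X - x) over x in l. *)
Definition realizes (R : comNzRingType) (n : nat) (A : 'M[R]_n) (l : seq R) : Prop :=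
  char_poly A = \prod_(x <- l) ('X - x%:P).

(* Block index: row/column p of the 2n x 2n matrix lies in block p %/ 2,
   at position p %% 2 inside the 2x2 block. *)
Lemma blk_proof (n : nat) (p : 'I_(n * 2)) : (p %/ 2 < n)%N.
Proof. by rewrite ltn_divLR. Qed.

Definition blk (n : nat) (p : 'I_(n * 2)) : 'I_n := Ordinal (blk_proof p).

(* M_{+gamma} = blockM S C gamma, M_{-gamma} = blockM S C (- gamma). *)
Definition blockM (R : fieldType) (n : nat) (S C : 'M[R]_n) (g : R) : 'M[R]_(n * 2) :=
  \matrix_(p, q)
    (if (p %% 2 == q %% 2)%N
     then (S (blk p) (blk q) + g * C (blk p) (blk q)) / 2
     else (S (blk p) (blk q) - g * C (blk p) (blk q)) / 2).

(* Main.v *)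
Require Import Defs.
From HB Require Import structures.
From mathcomp Require Import all_boot all_order all_algebra.
From mathcomp Require Import reals zify ring lra.
Set Implicit Arguments. Unset Strict Implicit. Unset Printing Implicit Defensive.
Import Order.TTheory GRing.Theory Num.Theory.
Local Open Scope ring_scope.

Section Comb.
Variable (R : fieldType) (n : nat).

Lemma ix0_proof (j : 'I_n) : (j * 2 < n * 2)%N.
Proof. have := ltn_ord j; lia. Qed.
Lemma ix1_proof (j : 'I_n) : (j * 2 + 1 < n * 2)%N.
Proof. have := ltn_ord j; lia. Qed.
Definition ix0 (j : 'I_n) : 'I_(n * 2) := Ordinal (ix0_proof j).
Definition ix1 (j : 'I_n) : 'I_(n * 2) := Ordinal (ix1_proof j).

Lemma blk_ix0 j : blk (ix0 j) = j.
Proof. apply: val_inj => /=; lia. Qed.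
Lemma blk_ix1 j : blk (ix1 j) = j.
Proof. apply: val_inj => /=; lia. Qed.
Lemma mod_ix0 j : ((ix0 j) %% 2 = 0)%N.
Proof. rewrite /=; lia. Qed.
Lemma mod_ix1 j : ((ix1 j) %% 2 = 1)%N.
Proof. rewrite /=; lia. Qed.

Lemma sum2 (j : 'I_n) (F : 'I_(n * 2) -> R) :
  \sum_q (blk q == j)%:R * F q = F (ix0 j) + F (ix1 j).
Proof.
rewrite (bigD1 (ix0 j)) //= (bigD1 (ix1 j)) /=; last first.
  by apply/eqP => /(congr1 val) /=; lia.
rewrite blk_ix0 blk_ix1 eqxx !mul1r big1 ?addr0 //.
move=> q /andP [/eqP nq1 /eqP nq0].
case: eqP => [/(congr1 val) /= H|]; last by rewrite mul0r.
exfalso. move: H; rewrite /blk /= => H.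
have : (nat_of_ord q == j * 2)%N || (nat_of_ord q == j * 2 + 1)%N by lia.
case/orP => /eqP E.
  by apply: nq1; apply: val_inj.
by apply: nq0; apply: val_inj.
Qed.

Lemma sum1 (a : 'I_n) (F : 'I_n -> R) :
  \sum_i (a == i)%:R * F i = F a.
Proof.
rewrite (bigD1 a) //= eqxx mul1r big1 ?addr0 // => i /negPf.
by rewrite eq_sym => ->; rewrite mul0r.
Qed.
End Comb.

Section Mat.
Variable (R : numFieldType) (n : nat).

Definition sg (p : 'I_(n * 2)) : R := if (p %% 2 == 0)%N then 1 else -1.
Definition Q1 : 'M[R]_(n * 2, n) := \matrix_(p, j) (blk p == j)%:R.
Definition Q2 : 'M[R]_(n * 2, n) := \matrix_(p, j) ((blk p == j)%:R * sg p).

Lemma mod2_cases (p : 'I_(n * 2)) : ((p %% 2 = 0) \/ (p %% 2 = 1))%N.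
Proof. lia. Qed.

Lemma MQ1 (S C : 'M[R]_n) g : blockM S C g *m Q1 = Q1 *m S.
Proof.
apply/matrixP => p j; rewrite !mxE.
under eq_bigr => q _ do rewrite [Q1 _ _]mxE mulrC.
rewrite sum2.
under eq_bigr => i _ do rewrite [Q1 _ _]mxE.
rewrite sum1 !mxE blk_ix0 blk_ix1 mod_ix0 mod_ix1.
have h2 : (2 : R) != 0 by rewrite pnatr_eq0.
by case: (mod2_cases p) => ->; rewrite /=; field.
Qed.

Lemma MQ2 (S C : 'M[R]_n) g : blockM S C g *m Q2 = Q2 *m (g *: C).
Proof.
apply/matrixP => p j; rewrite !mxE.
under eq_bigr => q _ do rewrite [Q2 _ _]mxE mulrCA.

rewrite sum2.
under eq_bigr => i _ do rewrite [Q2 _ _]mxE -mulrA.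
rewrite sum1 !mxE blk_ix0 blk_ix1 /sg mod_ix0 mod_ix1.
have h2 : (2 : R) != 0 by rewrite pnatr_eq0.
by case: (mod2_cases p) => ->; rewrite /=; field.
Qed.

Lemma QQ11 : Q1^T *m Q1 = (2 : R)%:M.
Proof.
apply/matrixP => i j; rewrite !mxE.
under eq_bigr => q _ do rewrite !mxE.
rewrite sum2 blk_ix0 blk_ix1.
by case: (i == j); rewrite /= ?addr0.
Qed.

Lemma QQ12 : Q1^T *m Q2 = 0.
Proof.
apply/matrixP => i j; rewrite !mxE.
under eq_bigr => q _ do rewrite !mxE.
rewrite sum2 blk_ix0 blk_ix1 /sg mod_ix0 mod_ix1 /=.
by case: (i == j); rewrite /= ?mul0r ?addr0 // !mul1r subrr.
Qed.

Lemma QQ21 : Q2^T *m Q1 = 0.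
Proof.
apply/matrixP => i j; rewrite !mxE.
under eq_bigr => q _ do rewrite !mxE -mulrA.
rewrite sum2 blk_ix0 blk_ix1 /sg mod_ix0 mod_ix1 /=.
by case: (i == j); rewrite /= ?mul0r ?mulr0 ?addr0 // !mulr1 subrr.
Qed.

Lemma QQ22 : Q2^T *m Q2 = (2 : R)%:M.
Proof.
apply/matrixP => i j; rewrite !mxE.
under eq_bigr => q _ do rewrite !mxE -mulrA.
rewrite sum2 blk_ix0 blk_ix1 /sg mod_ix0 mod_ix1 /=.
case: (i == j); rewrite /= ?mul0r ?mulr0 ?addr0 //.
by rewrite !mul1r mulrN1 opprK.
Qed.

End Mat.

Lemma cp_intertwine (R : numFieldType) m m' (e : m' = m) (A : 'M[R]_m)
  (B : 'M[R]_m') (Q : 'M[R]_(m, m')) :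
  A *m Q = Q *m B -> Q^T *m Q = (2:R)%:M -> char_poly A = char_poly B.
Proof.
subst m' => AQ QQ.
have dQ : \det Q != 0.
  have := congr1 determinant QQ; rewrite det_mulmx det_tr det_scalar => h.
  apply/eqP => h0; move: h; rewrite h0 mul0r => /esym/eqP.
  by rewrite expf_eq0 pnatr_eq0 andbF.
have key : char_poly_mx A *m map_mx polyC Q = map_mx polyC Q *m char_poly_mx B.
  rewrite /char_poly_mx mulmxBl mulmxBr -!map_mxM AQ; congr (_ - _).
  by rewrite scalar_mxC.
have := congr1 determinant key; rewrite !det_mulmx det_map_mx.
rewrite [_ * char_poly B]mulrC => /mulIf; apply.
by rewrite polyC_eq0.
Qed.

Lemma cp_block (R : comNzRingType) m1 m2 (A : 'M[R]_m1) (D : 'M[R]_m2) :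
  char_poly (block_mx A 0 0 D) = char_poly A * char_poly D.
Proof.
rewrite /char_poly /char_poly_mx map_block_mx !raddf0 scalar_mx_block.
by rewrite opp_block_mx add_block_mx !oppr0 !addr0 det_ublock.
Qed.

Lemma prodM_seq (R : comNzRingType) (T : Type) (a : R) (F : T -> R) (s : seq T) :
  \prod_(x <- s) (a * F x) = a ^+ size s * \prod_(x <- s) F x.
Proof.
elim: s => [|x s IH]; first by rewrite !big_nil mulr1.
by rewrite !big_cons IH exprS /=; ring.
Qed.

Lemma prod_const_seq' (R : comNzRingType) (T : Type) (a : R) (s : seq T) :
  \prod_(x <- s) a = a ^+ size s.
Proof.
elim: s => [|x s IH]; first by rewrite big_nil.
by rewrite big_cons IH exprS.
Qed.

Lemma cp_scale (R : fieldType) n (C : 'M[R]_n) g (s : seq R) :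
  size s = n -> char_poly C = \prod_(x <- s) ('X - x%:P) ->
  char_poly (g *: C) = \prod_(x <- s) ('X - (g * x)%:P).
Proof.
move=> hs hC.
have [->|g0] := eqVneq g 0.
  rewrite scale0r.
  have -> : char_poly (0 : 'M[R]_n) = 'X ^+ n.
    rewrite char_poly_trig; last by apply/is_trig_mxP => i j _; rewrite mxE.
    under eq_bigr => i _ do rewrite mxE subr0.
    by rewrite prodr_const card_ord.
  under eq_bigr => x _ do rewrite mul0r subr0.
  by rewrite prod_const_seq' hs.
pose q : {poly R} := g^-1%:P * 'X.
have E1 : char_poly (g *: C) = (g%:P) ^+ n * (char_poly C \Po q).
  rewrite /char_poly -det_map_mx -det_scalar -det_mulmx; congr determinant.
  apply/matrixP => i j; rewrite mul_scalar_mx !mxE.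
  rewrite rmorphB /= rmorphMn /= comp_polyX comp_polyC.
  case: (i == j); rewrite /= ?mulr1n ?mulr0n ?add0r ?sub0r.
    rewrite mulrBr /q mulrA -polyCM mulfV // mul1r polyCM.
    by [].
  by rewrite mulrN polyCM.
rewrite E1 hC rmorph_prod /= -hs -prodM_seq.
apply: eq_bigr => x _.
rewrite rmorphB /= comp_polyX comp_polyC /q mulrBr mulrA -polyCM mulfV //.
by rewrite mul1r polyCM.
Qed.

Lemma cp_blockM (R : numFieldType) n (S C : 'M[R]_n) g :
  char_poly (blockM S C g) = char_poly S * char_poly (g *: C).
Proof.
rewrite -cp_block.
have e : (n + n = n * 2)%N by lia.
apply: (@cp_intertwine _ (n * 2) (n + n) e _ _ (row_mx (Q1 R n) (Q2 R n))).
  by rewrite mul_mx_row mul_row_block !mulmx0 addr0 add0r MQ1 MQ2.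
by rewrite tr_row_mx mul_col_row QQ11 QQ12 QQ21 QQ22 -scalar_mx_block.
Qed.

Theorem corollary1 (R : realType) (n : nat) (S C : 'M[R]_n)
    (lam mu : seq R) (gamma : R) :
  is_symmetric S -> is_symmetric C ->
  size lam = n -> size mu = n ->
  realizes S lam -> realizes C mu ->
  0 <= gamma <= 1 ->
  (forall i j, `|C i j| <= S i j) ->
  [/\ is_symmetric (2^-1 *: (S + gamma *: C)) /\ nonnegmx (2^-1 *: (S + gamma *: C)),
      is_symmetric (2^-1 *: (S - gamma *: C)) /\ nonnegmx (2^-1 *: (S - gamma *: C)),
      [/\ is_symmetric (blockM S C gamma), nonnegmx (blockM S C gamma) &
          realizes (blockM S C gamma) (lam ++ [seq gamma * x | x <- mu])] &
      [/\ is_symmetric (blockM S C (- gamma)), nonnegmx (blockM S C (- gamma)) &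
          realizes (blockM S C (- gamma)) (lam ++ [seq - gamma * x | x <- mu])]].
Proof.
move=> hS hC hl hm rS rC /andP[g0 g1] hSC.
have sS i j : S i j = S j i by rewrite -{1}hS mxE.
have sC i j : C i j = C j i by rewrite -{1}hC mxE.
have nn g i j : `|g| <= 1 -> 0 <= S i j + g * C i j /\ 0 <= S i j - g * C i j.
  move=> hg.
  have h : `|g * C i j| <= S i j.
    rewrite normrM; apply: le_trans (hSC i j).
    by apply: ler_piMl.
  move: h; rewrite ler_norml => /andP[h1 h2].
  split; lra.
have ng : `|gamma| <= 1 by rewrite ger0_norm.
have ngN : `|- gamma| <= 1 by rewrite normrN ger0_norm.
have i2 : (0 : R) <= 2^-1 by rewrite invr_ge0.
have symB g : is_symmetric (blockM S C g).
  by apply/matrixP => p q; rewrite !mxE eq_sym (sS (blk q)) (sC (blk q)).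
have nnB g : `|g| <= 1 -> nonnegmx (blockM S C g).
  move=> hg p q; rewrite mxE; have [h1 h2] := nn g (blk p) (blk q) hg.
  by case: ifP => _; apply: divr_ge0.
have realB g : realizes (blockM S C g) (lam ++ [seq g * x | x <- mu]).
  by rewrite /realizes cp_blockM rS (cp_scale _ hm rC) big_cat big_map.
split.
- split; first by apply/matrixP => i j; rewrite !mxE sS sC.
  move=> i j; rewrite !mxE; apply: mulr_ge0 => //.
  by have [] := nn gamma i j ng.
- split; first by apply/matrixP => i j; rewrite !mxE sS sC.
  move=> i j; rewrite !mxE; apply: mulr_ge0 => //.
  by have [] := nn gamma i j ng.
- by split; [apply: symB | apply: nnB | apply: realB].
- by split; [apply: symB | apply: nnB | apply: realB].
Qed.
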